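(* Let $\mathcal{L}$ be a finite geometric lattice, $\mathcal{G}$ a building set of $\mathcal{L}$, and $G\in\mathcal{G}$. Then $\mathcal{G}\setminus\{G\}$ is a building set of $\mathcal{L}$ if and only if the join map \[ \prod_{F\in\max(\mathcal{G}\setminus\{G\})_{\leqslant G}}[\hat0,F]\to[\hat0,G],\qquad (H_F)_F\mapsto\bigvee_F H_F, \] is an isomorphism of posets.
   Context: For $\mathcal{H}\subseteq\mathcal{L}$ and $F\in\mathcal{L}$, $\mathcal{H}_{\leqslant F}=\{H\in\mathcal{H}:H\leqslant F\}$ and $\max\mathcal{H}_{\leqslant F}$ is its set of maximal elements. A building set of $\mathcal{L}$ is $\mathcal{G}\subseteq\mathcal{L}\setminus\{\hat0\}$ such that for every $F\neq\hat0$ the join map $\prod_{H\in\max\mathcal{G}_{\leqslant F}}[\hat0,H]\to[\hat0,F]$ is a poset isomorphism. *)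

(* Defs.v *)
From HB Require Import structures.
From mathcomp Require Import all_boot all_order.
Set Implicit Arguments. Unset Strict Implicit. Unset Printing Implicit Defensive.
Import Order.TTheory.
Local Open Scope order_scope.

Section Defs.
Context {disp : Order.disp_t} {L : finTBLatticeType disp}.

Definition covers (x y : L) : bool :=
  (x < y) && [forall z : L, ~~ ((x < z) && (z < y))].

Definition atom (a : L) : bool := covers \bot a.

Definition atomistic : Prop :=
  forall x : L, x = \join_(a : L | atom a && (a <= x)) a.

Definition semimodular : Prop :=
  forall a b : L, covers (a `&` b) a -> covers (a `&` b) b ->
    covers a (a `|` b) && covers b (a `|` b).

Definition geometric : Prop := atomistic /\ semimodular.

Definition max_le (H : {set L}) (F : L) : {set L} :=
  [set X in H | (X <= F) &&
     [forall Y in H, ((Y <= F) && (X <= Y)) ==> (X == Y)]].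

(* elements of the product prod_{H in M} [\bot, H], represented as finite
   functions supported on M *)
Definition in_prod (M : {set L}) (f : {ffun L -> L}) : Prop :=
  (forall H, H \in M -> f H <= H) /\ (forall H, H \notin M -> f H = \bot).

Definition join_map (M : {set L}) (f : {ffun L -> L}) : L :=
  \join_(H in M) f H.

Definition join_iso (M : {set L}) (F : L) : Prop :=
  [/\ forall f, in_prod M f -> join_map M f <= F,
      forall x, x <= F -> exists2 f, in_prod M f & join_map M f = x &
      forall f g, in_prod M f -> in_prod M g ->
        ((forall H, H \in M -> f H <= g H) <-> join_map M f <= join_map M g)].

Definition building_set (GG : {set L}) : Prop :=
  \bot \notin GG /\
  forall F : L, F != \bot -> join_iso (max_le GG F) F.

End Defs.

(* Main.v *)
Require Import Defs.
From HB Require Import structures.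
From mathcomp Require Import all_boot all_order.
From mathcomp Require Import zify.
Import Order.TTheory.
Local Open Scope order_scope.

Section Aux.
Context {disp : Order.disp_t} {L : finTBLatticeType disp}.
Implicit Types (A B : {set L}) (F G X Y : L).

Lemma max_leP (H : {set L}) F X :
  reflect [/\ X \in H, X <= F & forall Y, Y \in H -> Y <= F -> X <= Y -> X = Y]
          (X \in max_le H F).
Proof.
rewrite /max_le inE; apply: (iffP andP).
  move=> [XH /andP[XF /forall_inP all]]; split=> // Y YH YF XY.
  by apply/eqP; move/implyP: (all Y YH); apply; rewrite YF XY.
move=> [XH XF all]; split=> //; rewrite XF /=.
by apply/forall_inP => Y YH; apply/implyP => /andP[YF XY]; rewrite (all Y).
Qed.

Lemma exists_max (H : {set L}) F Y : Y \in H -> Y <= F ->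
  exists2 M, M \in max_le H F & Y <= M.
Proof.
suff: forall n Y, ltn (#|L| - #|[set Z : L | Z <= Y]|) n -> Y \in H -> Y <= F ->
  exists2 M, M \in max_le H F & Y <= M by apply; apply: ltnSn.
elim=> // n IH {}Y lt YH YF.
case: (boolP (Y \in max_le H F)) => [YM|]; first by exists Y.
rewrite /max_le inE YH YF /= => /forall_inPn [Y' Y'H].
rewrite negb_imply => /andP [/andP[Y'F YY'] neq].
have pr : [set Z : L | Z <= Y] \proper [set Z : L | Z <= Y'].
  rewrite properE; apply/andP; split.
    by apply/subsetP => Z; rewrite !inE => /le_trans; apply.
  apply/subsetPn; exists Y'; rewrite !inE //.
  by apply/negP => Y'Y; move/negP: neq; apply; rewrite eq_le YY' Y'Y.
have c1 := proper_card pr.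
have c2 : #|[set Z : L | Z <= Y']| <= #|L| by apply: max_card.
have [M MH YM] : exists2 M, M \in max_le H F & Y' <= M.
  apply: IH => //.
  have c3 : #|[set Z : L | Z <= Y]| <= #|L| by apply: max_card.
  move: lt c1 c2 c3; rewrite /ltn /=; lia.
by exists M => //; apply: le_trans YM.
Qed.

Lemma iso_disj M F X G1 G2 : join_iso M F -> G1 \in M -> G2 \in M ->
  G1 != G2 -> X <= G1 -> X <= G2 -> X = \bot.
Proof.
move=> [_ _ iso3] G1M G2M neq XG1 XG2.
pose f := [ffun H : L => if H == G1 then X else \bot].
pose g := [ffun H : L => if H == G2 then X else \bot].
have pf : in_prod M f.
  split=> H; rewrite ffunE; case: eqP => [->|] //=.
  by move=> hh; rewrite G1M in hh.
have pg : in_prod M g.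
  split=> H; rewrite ffunE; case: eqP => [->|] //=.
  by move=> hh; rewrite G2M in hh.
have jf : join_map M f = X.
  rewrite /join_map (bigD1 G1) //= ffunE eqxx big1 ?joinx0 //.
  by move=> H /andP[_ /negbTE]; rewrite ffunE => ->.
have jg : join_map M g = X.
  rewrite /join_map (bigD1 G2) //= ffunE eqxx big1 ?joinx0 //.
  by move=> H /andP[_ /negbTE]; rewrite ffunE => ->.
have := (proj2 (iso3 g f pg pf)); rewrite jf jg lexx => /(_ isT) /(_ G2 G2M).
by rewrite !ffunE eqxx eq_sym (negbTE neq) lex0 => /eqP.
Qed.

Lemma compose A B F G : join_iso A F -> join_iso B G -> G \in A ->
  (forall H, H \in A -> H <= F) ->
  (forall X, X \in A -> X \in B -> X = G) ->
  join_iso ((A :\ G) :|: B) F.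
Proof.
move=> [a1 a2 a3] [b1 b2 b3] GA hA disj.
have GF := hA G GA.
pose r (h : {ffun L -> L}) := [ffun H => if H \in B then h H else \bot].
have rP h : in_prod ((A :\ G) :|: B) h -> in_prod B (r h).
  move=> [h1 h2]; split=> H; rewrite ffunE.
    by move=> HB; rewrite HB; apply: h1; rewrite inE HB orbT.
  by move/negbTE => ->.
have rJ h : join_map B (r h) = \join_(H in B) h H.
  by apply: eq_bigr => H HB; rewrite ffunE HB.
have jB h : in_prod ((A :\ G) :|: B) h -> \join_(H in B) h H <= G.
  by move=> ph; rewrite -rJ; apply: b1; apply: rP.
have splitA (f : {ffun L -> L}) :
    join_map A f = f G `|` \join_(H in A :\ G) f H.
  rewrite /join_map (bigD1 G) //=; congr (_ `|` _).
  by apply: eq_bigl => H; rewrite in_setD1 andbC.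
pose Phi (h : {ffun L -> L}) :=
  [ffun H => if H == G then \join_(K in B) h K else if H \in A then h H else \bot].
have PhiP h : in_prod ((A :\ G) :|: B) h -> in_prod A (Phi h).
  move=> ph; have [h1 h2] := ph; split=> H; rewrite ffunE.
    case: eqP => [->|/eqP nHG HA]; first by move=> _; apply: jB.
    by rewrite HA; apply: h1; rewrite !inE nHG HA.
  by move=> HA; rewrite (negbTE HA); case: eqP => // HG; rewrite HG GA in HA.
have PhiJ h : join_map A (Phi h) = join_map ((A :\ G) :|: B) h.
  rewrite splitA /join_map joins_setU joinC ffunE eqxx; congr (_ `|` _).
  by apply: eq_bigr => H; rewrite ffunE in_setD1 => /andP[/negbTE -> ->].
split.
- move=> h ph; rewrite -PhiJ; exact: a1 (PhiP h ph).
- move=> x xF; have [f pf fx] := a2 x xF.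
  have [fG _] := pf; have := fG G GA => fGG.
  have [g pg gx] := b2 (f G) fGG.
  pose h := [ffun H => if H \in B then g H else if H \in A :\ G then f H else \bot].
  exists h.
    split=> H; rewrite ffunE.
      rewrite inE; case: (boolP (H \in B)) => HB; first by move=> _; have [g1 _] := pg; apply: g1.
      by rewrite orbF => HA; rewrite HA; apply: fG; move: HA; rewrite inE => /andP[].
    by rewrite inE negb_or => /andP[/negbTE -> /negbTE ->].
  rewrite -fx splitA /join_map joins_setU joinC -gx; congr (_ `|` _).
    by apply: eq_bigr => H HB; rewrite ffunE HB.
  apply: eq_bigr => H HAG; rewrite ffunE HAG.
  case: (boolP (H \in B)) => // HB; move: HAG; rewrite in_setD1 => /andP[nHG HA].
  by rewrite (disj H HA HB) eqxx in nHG.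
- move=> h1 h2 p1 p2; rewrite -!PhiJ -(a3 _ _ (PhiP _ p1) (PhiP _ p2)).
  have eB : (forall H, H \in B -> h1 H <= h2 H) <->
            \join_(K in B) h1 K <= \join_(K in B) h2 K.
    rewrite -!rJ -(b3 _ _ (rP _ p1) (rP _ p2)); split=> hh H HB.
      by rewrite !ffunE HB; apply: hh.
    by have := hh H HB; rewrite !ffunE HB.
  split.
    move=> hh H HA; rewrite !ffunE; case: eqP => [_|/eqP nHG].
      by apply/eB => K KB; apply: hh; rewrite inE KB orbT.
    by rewrite HA; apply: hh; rewrite !inE nHG HA.
  move=> hh H; rewrite inE; case/orP => [HAG|HB].
    move: HAG; rewrite in_setD1 => /andP[nHG HA].
    by have := hh H HA; rewrite !ffunE (negbTE nHG) HA.
  have := hh G GA; rewrite !ffunE eqxx => /eB; exact.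
Qed.

End Aux.

Theorem lemma2p26 (d : Order.disp_t) (L : finTBLatticeType d)
  (GG : {set L}) (G : L) :
  geometric (L := L) -> building_set GG -> G \in GG ->
  (building_set (GG :\ G) <-> join_iso (max_le (GG :\ G) G) G).
Proof.
move=> _ [bot bs] GGG.
have Gn0 : G != \bot by apply/eqP => GE; rewrite -GE GGG in bot.
split; first by move=> [_ bs']; apply: bs'.
move=> isoG; split; first by rewrite inE negb_and bot orbT.
move=> F Fn0; have isoA := bs F Fn0.
case: (boolP (G \in max_le GG F)) => GA.
  have [_ GF _] := max_leP _ _ _ GA.
  suff -> : max_le (GG :\ G) F = (max_le GG F :\ G) :|: max_le (GG :\ G) G.
    apply: compose => //.
      by move=> H /max_leP [].
    move=> X /max_leP [XG XF Xmax] /max_leP [_ XleG _].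
    by apply: Xmax.
  apply/setP => X; apply/idP/idP.
    move=> /max_leP [XG' XF Xmax]; move: (XG'); rewrite in_setD1 => /andP[nXG XGG].
    rewrite inE; case: (boolP (X <= G)) => XleG.
      apply/orP; right; apply/max_leP; split=> // Y YG' YleG XY.
      by apply: Xmax => //; apply: le_trans GF.
    apply/orP; left; rewrite in_setD1 nXG; apply/max_leP; split=> // Y YGG YF XY.
    case: (eqVneq Y G) => [YG|nYG]; first by rewrite -YG XY in XleG.
    by apply: Xmax => //; rewrite in_setD1 nYG.
  rewrite inE; case/orP.
    rewrite in_setD1 => /andP[nXG /max_leP [XGG XF Xmax]].
    apply/max_leP; split=> //; first by rewrite in_setD1 nXG.
    by move=> Y; rewrite in_setD1 => /andP[_ YGG]; apply: Xmax.
  move=> /max_leP [XG' XleG Xmax]; move: (XG'); rewrite in_setD1 => /andP[nXG XGG].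
  apply/max_leP; split=> //; first by apply: le_trans GF.
  move=> Y YG' YF XY; move: (YG'); rewrite in_setD1 => /andP[nYG YGG].
  have [M MA YM] := exists_max _ _ _ YGG YF.
  case: (eqVneq M G) => [MG|nMG].
    by apply: Xmax => //; rewrite -MG.
  have X0 : X = \bot.
    by apply: (iso_disj _ _ _ _ _ isoA GA MA _ XleG (le_trans XY YM)); rewrite eq_sym.
  by move: bot; rewrite -X0 XGG.
suff -> : max_le (GG :\ G) F = max_le GG F by [].
apply/setP => X; apply/idP/idP.
  move=> /max_leP [XG' XF Xmax]; move: (XG'); rewrite in_setD1 => /andP[nXG XGG].
  apply/max_leP; split=> // Y YGG YF XY.
  case: (eqVneq Y G) => [YG|nYG]; last by apply: Xmax => //; rewrite in_setD1 nYG.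
  rewrite YG in YF XY.
  have [M MA GM] := exists_max _ _ _ GGG YF.
  have [MGG MF _] := max_leP _ _ _ MA.
  have nMG : M != G by apply/eqP => MG; move: GA; rewrite -MG MA.
  have XM : X = M by apply: Xmax; rewrite ?in_setD1 ?nMG //; apply: le_trans GM.
  by rewrite XM in nXG; move/negP: nMG; case; rewrite eq_le GM -XM XY.
move=> XA; have [XGG XF Xmax] := max_leP _ _ _ XA.
have nXG : X != G by apply/eqP => XG; move: GA; rewrite -XG XA.
apply/max_leP; split; rewrite ?in_setD1 ?nXG //.
by move=> Y; rewrite in_setD1 => /andP[_ YGG]; apply: Xmax.
Qed.
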